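(* For every $M>0$, no deterministic algorithm can achieve a competitive ratio better than $\frac{1}{M}$ for online Submodular Welfare in the adversarial setting with general (not necessarily monotone) non-negative submodular utilities.
   Context: A set function $f:2^{\mathcal N}\to\mathbb R_{\ge 0}$ is submodular if $f(A\cup B)+f(A\cap B)\le f(A)+f(B)$ for all $A,B\subseteq\mathcal N$. Online Submodular Welfare: there are $n$ bidders, bidder $j$ having a non-negative submodular (not necessarily monotone) utility $f_j$ over a set $\mathcal N$ of items that arrive one by one. When an item arrives, the algorithm must immediately and irrevocably assign it to one bidder or discard it; the goal is to maximize $\sum_j f_j(S_j)$, where $S_j$ is the set of items assigned to bidder $j$ (pairwise disjoint). Utilities are accessed via value oracles, and upon an item's arrival the algorithm may only query sets of items that already arrived. In the adversarial setting an adversary chooses the arrival order (and, since only queries on arrived items are possible, the instance may depend on the algorithm's earlier decisions). An algorithm has competitive ratio $\alpha$ if on every instance its value is at least $\alpha$ times the optimal offline value. *)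

(* Defs.v *)
From HB Require Import structures.
From mathcomp Require Import all_boot all_order all_algebra.
From mathcomp Require Import reals.
Set Implicit Arguments. Unset Strict Implicit. Unset Printing Implicit Defensive.
Import Order.TTheory GRing.Theory Num.Theory.
Local Open Scope ring_scope.

Section Defs.
Variable R : realType.

(* Items are indexed 0..m-1 in arrival order; bidders are 'I_n. *)

Definition nonneg_submodular (T : finType) (f : {set T} -> R) : Prop :=
  (forall A, 0 <= f A) /\
  (forall A B, f (A :|: B) + f (A :&: B) <= f A + f B).

(* A deterministic online algorithm: when the item with arrival index k
   arrives, it knows the number of bidders n and can only query the value
   oracles of the bidders on subsets of the items arrived so far, i.e. of
   {0,..,k} (represented as 'I_k.+1).  It answers [Some j] (assign to
   bidder j) or [None] (discard).  It does not know the total number of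
   items.  Its earlier decisions are functions of earlier (restricted)
   oracles, hence recomputable; adaptivity of the adversary is subsumed
   since the algorithm is deterministic. *)
Definition online_alg : Type :=
  forall (n k : nat), ('I_n -> {set 'I_k.+1} -> R) -> option 'I_n.

Definition restrict_oracle n m (f : 'I_n -> {set 'I_m} -> R) (i : 'I_m)
  : 'I_n -> {set 'I_(nat_of_ord i).+1} -> R :=
  fun j S => f j [set widen_ord (ltn_ord i) x | x in S].

Definition alg_decision (A : online_alg) n m (f : 'I_n -> {set 'I_m} -> R)
  (i : 'I_m) : option 'I_n :=
  @A n (nat_of_ord i) (@restrict_oracle n m f i).

Definition welfare n m (f : 'I_n -> {set 'I_m} -> R)
  (sigma : 'I_m -> option 'I_n) : R :=
  \sum_(j < n) f j [set i | sigma i == Some j].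

Definition alg_value (A : online_alg) n m (f : 'I_n -> {set 'I_m} -> R) : R :=
  welfare f (alg_decision A f).

(* Optimal offline value: max over all assignments (values are >= 0). *)
Definition opt_value n m (f : 'I_n -> {set 'I_m} -> R) : R :=
  \big[Order.max/0]_(sigma : {ffun 'I_m -> option 'I_n}) welfare f sigma.

Definition competitive (A : online_alg) (alpha : R) : Prop :=
  forall (n m : nat) (f : 'I_n -> {set 'I_m} -> R),
    (forall j, nonneg_submodular (f j)) ->
    alpha * opt_value f <= alg_value A f.

End Defs.

(* Main.v *)
Require Import Defs.
From HB Require Import structures.
From mathcomp Require Import all_boot all_order all_algebra.
From mathcomp Require Import reals.
From mathcomp Require Import lra.
From Stdlib Require Import FunctionalExtensionality.
Import Order.TTheory GRing.Theory Num.Theory.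
Local Open Scope ring_scope.

Section Aux.
Variable R : realType.
Variable M : R.

Definition i0 : 'I_2 := ord0.
Definition i1 : 'I_2 := @Ordinal 2 1 isT.

Definition fb (c b0 b1 : bool) : R :=
  if c then (if b0 && ~~ b1 then 1 else 0) + (if b1 && ~~ b0 then M else 0)
  else (if b0 then 1 else 0).

Definition ff (c : bool) : 'I_1 -> {set 'I_2} -> R :=
  fun _ S => fb c (i0 \in S) (i1 \in S).

Definition g0 : 'I_1 -> {set 'I_1} -> R :=
  fun _ S => if ord0 \in S then 1 else 0.

Lemma ff_sub (c : bool) : 0 < M -> forall j, nonneg_submodular (ff c j).
Proof.
move=> HM j; split.
  move=> A; rewrite /ff /fb; case: c; case: (i0 \in A); case: (i1 \in A) => /=; lra.
move=> A B; rewrite /ff /fb !in_setU !in_setI.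
case: c; case: (i0 \in A); case: (i1 \in A); case: (i0 \in B); case: (i1 \in B) => /=; lra.
Qed.

Lemma restr0 (c : bool) : restrict_oracle (ff c) (i:=i0) = g0.
Proof.
apply: functional_extensionality => j; apply: functional_extensionality => S.
rewrite /restrict_oracle /ff /g0 /fb.
have E0 : (i0 \in [set widen_ord (ltn_ord i0) x | x in S]) = (ord0 \in S).
  apply/imsetP/idP.
    by case=> x Hx /(congr1 val) /= Hv; have -> : ord0 = x by apply/val_inj; rewrite /= -Hv.
  by move=> H; exists ord0 => //; apply/val_inj.
have E1 : (i1 \in [set widen_ord (ltn_ord i0) x | x in S]) = false.
  apply/imsetP => -[x _ /(congr1 val) /=]; by case: x => [[]].
rewrite E0 E1 andbT /=; case: c => //; by rewrite addr0.
Qed.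

Lemma opt_ge (c : bool) (s : {ffun 'I_2 -> option 'I_1}) :
  welfare (ff c) s <= opt_value (ff c).
Proof. exact: le_bigmax. Qed.

End Aux.

Theorem theorem2 (R : realType) (M : R) :
  0 < M ->
  forall (A : online_alg R) (alpha : R), competitive A alpha -> alpha <= M^-1.
Proof.
move=> HM A alpha Hc.
have HMi : 0 < M^-1 by rewrite invr_gt0.
case: (lerP alpha 0) => Ha; first by lra.
set d0 := A 1%N 0%N (g0 R).
set c := if d0 is Some _ then true else false.
have H := Hc 1%N 2%N (ff R M c) (ff_sub R M c HM).
have D0 : alg_decision A (ff R M c) i0 = d0 by rewrite /alg_decision /= restr0.
set d1 := alg_decision A (ff R M c) i1.
have Hw : forall s : 'I_2 -> option 'I_1, welfare (ff R M c) s =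
    fb R M c (s i0 == Some ord0) (s i1 == Some ord0).
  move=> s; rewrite /welfare big_ord1 /ff !inE //.
have Hopt := opt_ge R M c.
move: H; rewrite /alg_value Hw D0 -/d1.
have Ec : c = (if d0 is Some _ then true else false) by [].
clearbody d1 c.
case E: d0 => [k|]; rewrite E in Ec; subst c.
-   have := Hopt [ffun i => if i == i1 then Some ord0 else None].
  rewrite Hw !ffunE /= /fb /= => Ho.
  have Ek : k = ord0 by apply/val_inj; case: (k) => [[]].
  rewrite Ek.
  case: d1 => [k'|] /=.
  + have -> : k' = ord0 by apply/val_inj; case: k' => [[]].
    rewrite /= => H. nra.
  + move=> H.
    have : alpha * M <= 1 by nra.
    move=> H2. rewrite -(ler_pM2r HM) mulVf ?gt_eqF //.
-   have := Hopt [ffun i => Some ord0].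
  rewrite Hw !ffunE /= /fb /= => Ho.
  rewrite /fb /=; case: (d1 == Some ord0) => /= H; nra.
Qed.
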